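(* Let $n\ge 2$ and $m\ge1$ be integers, and let $t,s,r\in\mathbb{Z}_n$ with $t,r$ units of $\mathbb{Z}_n$ and $s^2=(1-tr)s$ in $\mathbb{Z}_n$. Let $X=(\mathbb{Z}_n)^m$ and $B(x,y)=(ty+sx,\,rx)$. Then the birack rank of $(X,B)$ is the smallest integer $N>0$ such that $(tr+s)^N=1$ in $\mathbb{Z}_n$.
   Context: Let $X$ be a set. A map $B:X\times X\to X\times X$, written $B=(B_1,B_2)$, is strongly invertible if: (i) $B$ is a bijection; (ii) there is a unique invertible map $S:X\times X\to X\times X$ (the sideways map) with $S(B_1(x,y),x)=(B_2(x,y),y)$ for all $x,y$; (iii) writing $S=(S_1,S_2)$, $S^{-1}=(S^{-1}_1,S^{-1}_2)$ and $\Delta(x)=(x,x)$, each of $S_1\circ\Delta$, $S_2\circ\Delta$, $S^{-1}_1\circ\Delta$, $S^{-1}_2\circ\Delta$ is a bijection $X\to X$. A birack is a pair $(X,B)$ with $B$ strongly invertible satisfying the set-theoretic Yang–Baxter equation $(B\times\mathrm{Id})(\mathrm{Id}\times B)(B\times\mathrm{Id})=(\mathrm{Id}\times B)(B\times\mathrm{Id})(\mathrm{Id}\times B)$. Its kink map is $\pi=S^{-1}_1\circ\Delta\circ(S^{-1}_2\circ\Delta)^{-1}$. The birack rank is the smallest positive integer $N$ with $\pi^N(x)=x$ for all $x\in X$. *)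

(* Defs.v *)
From HB Require Import structures.
From mathcomp Require Import all_boot all_order all_algebra.
Set Implicit Arguments. Unset Strict Implicit. Unset Printing Implicit Defensive.
Import GRing.Theory.

Section Birack.
Variable X : Type.

Definition sideways_for (B S : X * X -> X * X) : Prop :=
  forall x y, S ((B (x, y)).1, x) = ((B (x, y)).2, y).

Definition strongly_invertible (B : X * X -> X * X) : Prop :=
  bijective B /\
  exists S Sinv : X * X -> X * X,
    cancel S Sinv /\ cancel Sinv S /\ sideways_for B S /\
    (forall S', bijective S' -> sideways_for B S' -> S' =1 S) /\
    bijective (fun x => (S (x, x)).1) /\ bijective (fun x => (S (x, x)).2) /\
    bijective (fun x => (Sinv (x, x)).1) /\ bijective (fun x => (Sinv (x, x)).2).

Definition BxId (B : X * X -> X * X) (p : X * X * X) : X * X * X :=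
  let: (x, y, z) := p in ((B (x, y)).1, (B (x, y)).2, z).

Definition IdxB (B : X * X -> X * X) (p : X * X * X) : X * X * X :=
  let: (x, y, z) := p in (x, (B (y, z)).1, (B (y, z)).2).

Definition set_YBE (B : X * X -> X * X) : Prop :=
  forall p, BxId B (IdxB B (BxId B p)) = IdxB B (BxId B (IdxB B p)).

Definition birack (B : X * X -> X * X) : Prop :=
  strongly_invertible B /\ set_YBE B.

(* pi is the kink map S^{-1}_1 o Delta o (S^{-1}_2 o Delta)^{-1},
   characterized by pi o (S^{-1}_2 o Delta) = S^{-1}_1 o Delta. *)
Definition is_kink_map (B : X * X -> X * X) (pi : X -> X) : Prop :=
  exists S Sinv : X * X -> X * X,
    [/\ cancel S Sinv, cancel Sinv S, sideways_for B S
      & forall x, pi (Sinv (x, x)).2 = (Sinv (x, x)).1].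

Definition is_birack_rank (pi : X -> X) (N : nat) : Prop :=
  [/\ (0 < N)%N, iter N pi =1 id
    & forall k, (0 < k)%N -> iter k pi =1 id -> (N <= k)%N].
End Birack.

Definition is_min_pow_one (R : pzRingType) (a : R) (N : nat) : Prop :=
  [/\ (0 < N)%N, (a ^+ N = 1)%R
    & forall k, (0 < k)%N -> (a ^+ k = 1)%R -> (N <= k)%N].

Definition affB (n m : nat) (t s r : 'Z_n)
  (p : 'rV['Z_n]_m * 'rV['Z_n]_m) : 'rV['Z_n]_m * 'rV['Z_n]_m :=
  (t *: p.2 + s *: p.1, r *: p.1)%R.

(* Main.v *)
Require Import Defs.
From HB Require Import structures.
From mathcomp Require Import all_boot all_order all_algebra.
Import GRing.Theory.
Local Open Scope ring_scope.

Lemma key_e {R : comUnitRingType} (t s r : R) (ht : t \is a GRing.unit) (hr : r \is a GRing.unit)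
  (hs : s ^+ 2 = (1 - t * r) * s) : s * ((t*r)^-1 * s) = (t*r)^-1 * s - s.
Proof.
have hw : (t*r) \is a GRing.unit by rewrite unitrM ht hr.
by rewrite mulrCA -expr2 hs mulrBl mul1r mulrBr mulrA mulVr // mul1r.
Qed.

Lemma u1s {R : comUnitRingType} (t s r : R) (ht : t \is a GRing.unit) (hr : r \is a GRing.unit)
  (hs : s ^+ 2 = (1 - t * r) * s) : (1 - s) \is a GRing.unit.
Proof.
apply/unitrPr; exists (1 + (t*r)^-1 * s).
rewrite mulrBl mul1r (mulrDr s) mulr1 key_e //.
by rewrite (addrC s) subrK addrK.
Qed.

Lemma uc {R : comUnitRingType} (t s r : R) (ht : t \is a GRing.unit) (hr : r \is a GRing.unit)
  (hs : s ^+ 2 = (1 - t * r) * s) : (t * r + s) \is a GRing.unit.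
Proof.
have hw : (t*r) \is a GRing.unit by rewrite unitrM ht hr.
apply/unitrPr; exists ((t*r)^-1 * (1 - s)).
by rewrite mulrDl mulrA mulrV // mul1r [X in s * X]mulrBr mulr1 mulrBr key_e // (mulrC s) opprB (addrC ((t*r)^-1 * s)) subrK subrK.

Qed.

Definition B0 (R : comUnitRingType) (V : lmodType R) (t s r : R) (p : V * V) : V * V :=
  (t *: p.2 + s *: p.1, r *: p.1).
Definition S0 (R : comUnitRingType) (V : lmodType R) (t s r : R) (p : V * V) : V * V :=
  (r *: p.2, t^-1 *: (p.1 - s *: p.2)).
Definition Si0 (R : comUnitRingType) (V : lmodType R) (t s r : R) (p : V * V) : V * V :=
  (t *: p.2 + (s / r) *: p.1, r^-1 *: p.1).

Section L.
Context (R : comUnitRingType) (V : lmodType R) (t s r : R)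
  (ht : t \is a GRing.unit) (hr : r \is a GRing.unit).

Lemma S0K : cancel (@S0 R V t s r) (@Si0 R V t s r).
Proof.
case=> a b; rewrite /S0 /Si0 /=.
by rewrite !scalerA mulrV // scale1r mulrVK // mulVr // scale1r subrK.
Qed.

Lemma Si0K : cancel (@Si0 R V t s r) (@S0 R V t s r).
Proof.
case=> u v; rewrite /S0 /Si0 /=.
by rewrite !scalerA mulrV // scale1r addrK scalerA mulVr // scale1r.
Qed.

Lemma side0 : sideways_for (@B0 R V t s r) (@S0 R V t s r).
Proof.
move=> x y; rewrite /S0 /B0 /=.
by rewrite addrK scalerA mulVr // scale1r.
Qed.

Lemma side_uniq S' : sideways_for (@B0 R V t s r) S' -> S' =1 (@S0 R V t s r).
Proof.
move=> hS [a b].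
have := hS b (t^-1 *: (a - s *: b)).
rewrite /B0 /= scalerA mulrV // scale1r subrK => ->.
by [].
Qed.

Lemma B0bij : bijective (@B0 R V t s r).
Proof.
exists (fun p : V * V => (r^-1 *: p.2, t^-1 *: (p.1 - (s / r) *: p.2))).
  case=> x y; rewrite /B0 /= !scalerA (mulVr hr) scale1r (mulrVK hr) addrK.
  by rewrite scalerA mulVr // scale1r.
case=> u v; rewrite /B0 /= !scalerA mulrV // scale1r mulrV // scale1r.
by rewrite subrK.
Qed.

Lemma scale_bij (a : R) : a \is a GRing.unit -> bijective (fun x : V => a *: x).
Proof.
move=> ha; exists (fun x : V => a^-1 *: x) => x; rewrite scalerA.
  by rewrite mulVr // scale1r.
by rewrite mulrV // scale1r.
Qed.

Lemma ybe0 (hs : s ^+ 2 = (1 - t * r) * s) : set_YBE (@B0 R V t s r).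
Proof.
case=> [[x y] z]; rewrite /BxId /IdxB /B0 /= !scalerDr !scalerA.
have e : t * s * r + s * s = s.
  by rewrite -expr2 hs mulrBl mul1r mulrAC (mulrC (t * r)) addrC subrK.
have e' : (t * s * r) *: x + (s * s) *: x = s *: x by rewrite -scalerDl e.
by rewrite (mulrC r t) (mulrC r s) (mulrC s t) -!addrA [X in _ *: z + X]addrCA e'.
Qed.

Lemma kink_eq pi : is_kink_map (@B0 R V t s r) pi -> forall y, pi y = (t * r + s) *: y.
Proof.
case=> S [Si [SK SiK hside hpi]].
have hS : S =1 @S0 R V t s r by apply: side_uniq.
have E p : Si p = @Si0 R V t s r p.
  apply: (can_inj S0K); by rewrite -hS SiK Si0K.
move=> y; have := hpi (r *: y); rewrite !E /Si0 /= !scalerA mulVr // scale1r mulrVK // -scalerDl => ->.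
by [].
Qed.

Lemma iter_scale (f : V -> V) (c : R) : (forall y, f y = c *: y) ->
  forall k y, iter k f y = c ^+ k *: y.
Proof.
move=> hf; elim=> [|k IH] y /=; first by rewrite scale1r.
by rewrite hf IH scalerA exprS.
Qed.

Lemma kink_exists (hs : s ^+ 2 = (1 - t * r) * s) :
  is_kink_map (@B0 R V t s r) (fun y => (t * r + s) *: y).
Proof.
exists (@S0 R V t s r), (@Si0 R V t s r); split.
- exact: S0K.
- exact: Si0K.
- exact: side0.
move=> x; rewrite /Si0 /= !scalerA -scalerDl.
by rewrite mulrDl mulrK.
Qed.

Lemma birack0 (hs : s ^+ 2 = (1 - t * r) * s) : birack (@B0 R V t s r).
Proof.
split; last exact: ybe0.
split; first exact: B0bij.
exists (@S0 R V t s r), (@Si0 R V t s r).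
split; first exact: S0K.
split; first exact: Si0K.
split; first exact: side0.
split; first by move=> S' _ h; apply: side_uniq.
split.
  apply: (@eq_bij _ _ (fun x => r *: x)); first exact: scale_bij.
  by [].
split.
  apply: (@eq_bij _ _ (fun x => (t^-1 * (1 - s)) *: x)).
    by apply: scale_bij; rewrite unitrM unitrV ht (@u1s R t s r ht hr hs).
  by move=> x; rewrite /S0 /= -scalerA scalerBl scale1r.
split.
  apply: (@eq_bij _ _ (fun x => ((t * r + s) / r) *: x)).
    by apply: scale_bij; rewrite unitrM unitrV hr (@uc R t s r ht hr hs).
  move=> x; rewrite /Si0 /= -scalerDl; congr (_ *: _).
  by rewrite mulrDl mulrK.
apply: (@eq_bij _ _ (fun x => r^-1 *: x)); first by apply: scale_bij; rewrite unitrV.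
by [].
Qed.

End L.

Theorem mainTheorem5 (n m : nat) (t s r : 'Z_n)
  (hn : (1 < n)%N) (hm : (0 < m)%N)
  (ht : t \is a GRing.unit) (hr : r \is a GRing.unit)
  (hs : s ^+ 2 = (1 - t * r) * s) :
  birack (@affB n m t s r) /\
  (exists pi, is_kink_map (@affB n m t s r) pi) /\
  (forall pi, is_kink_map (@affB n m t s r) pi ->
     forall N : nat, is_birack_rank pi N <-> is_min_pow_one (t * r + s) N).
Proof.
split; first exact: (@birack0 _ 'rV['Z_n]_m t s r ht hr hs).
split; first by eexists; exact: (@kink_exists _ 'rV['Z_n]_m t s r ht hr hs).
move=> pi hpi N.
have hit := @iter_scale _ _ pi (t * r + s) (@kink_eq _ 'rV['Z_n]_m t s r ht hr pi hpi).
have key k : iter k pi =1 id <-> (t * r + s) ^+ k = 1.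
  split=> [h|h y]; last by rewrite hit h scale1r.
  have := congr1 (fun M : 'rV['Z_n]_m => M 0 (Ordinal hm)) (h (const_mx 1)).
  by rewrite /= hit !mxE mulr1.
split; case=> h0 h1 h2; split=> //.
- by apply/key.
- by move=> k hk /key; apply: h2.
- by apply/key.
- by move=> k hk /key; apply: h2.
Qed.
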